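(* Let $n\geq 3$. There is no u-p-word for $n$-permutations of the form $u=\Diamond u_2u_3\cdots u_N$ containing exactly one $\Diamond$ (that is, with $u_2,\ldots,u_N$ all integers).
   Context: An $n$-permutation is a permutation of $\{1,\ldots,n\}$. For a word $w$ of distinct numbers, $\mathrm{red}(w)$ is obtained by replacing the $i$-th smallest letter by $i$. Let $\Diamond$ be a symbol not among the integers. A word $f=f_1\cdots f_n$ over the positive integers together with $\Diamond$, whose integer letters are pairwise distinct, covers an $n$-permutation $\pi$ if one can substitute real numbers for the occurrences of $\Diamond$ (independently) so that the resulting word has $n$ pairwise distinct entries and reduces to $\pi$; equivalently, $f_i<f_j\iff\pi_i<\pi_j$ for all positions $i,j$ holding integers. A u-p-word for $n$-permutations is a word $u_1\cdots u_N$, $N\geq n$, over this alphabet containing at least one $\Diamond$, such that every factor $u_i\cdots u_{i+n-1}$ ($1\leq i\leq N-n+1$) has pairwise distinct integer letters and every $n$-permutation is covered by exactly one of these factors. *)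

(* Defs.v *)
From mathcomp Require Import all_boot all_order all_fingroup.
Unset Strict Implicit. Unset Printing Implicit Defensive.

Definition letter := option nat.
Notation Diamond := (@None nat).

Definition ints (f : seq letter) : seq nat := pmap id f.

Definition pos_letters (f : seq letter) : bool := all (fun k => 0 < k) (ints f).

(* f covers the n-permutation pi: f has length n, its integer letters are
   pairwise distinct, and f_i < f_j <-> pi_i < pi_j at all positions i, j
   holding integers (the paper's equivalent formulation of covering). *)
Definition covers (n : nat) (f : seq letter) (pi : 'S_n) : Prop :=
  size f = n /\ uniq (ints f) /\
  forall (i j : 'I_n) (a b : nat),
    nth Diamond f i = Some a -> nth Diamond f j = Some b ->
    (a < b <-> pi i < pi j).

(* the upfactor u_{i+1} ... u_{i+n} (0-based start i) *)
Definition upfactor (n : nat) (u : seq letter) (i : nat) : seq letter :=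
  take n (drop i u).

Definition upword (n : nat) (u : seq letter) : Prop :=
  pos_letters u /\
  n <= size u /\
  Diamond \in u /\
  (forall i, i <= size u - n -> uniq (ints (upfactor n u i))) /\
  (forall pi : 'S_n, exists! i, i <= size u - n /\ covers n (upfactor n u i) pi).

(* Main.v *)
Require Import Defs.
From mathcomp Require Import all_boot all_order all_fingroup zify.
Set Warnings "-notation-overridden".

Lemma ints_map (t : seq nat) : ints (map Some t) = t.
Proof. by rewrite /ints; elim: t => //= x t ->. Qed.

Lemma cover_full n t (p : 'S_n) : size t = n -> uniq t ->
  (forall i j : 'I_n, nth 0 t i < nth 0 t j <-> p i < p j) -> covers n (map Some t) p.
Proof.
move=> Hs Hu H; split; first by rewrite size_map.
split; first by rewrite ints_map.
move=> i j a b; rewrite !(nth_map 0) ?Hs ?ltn_ord // => -[<-] [<-]; exact: H.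
Qed.

Lemma covers_full n t (p : 'S_n) : covers n (map Some t) p ->
  forall i j : 'I_n, nth 0 t i < nth 0 t j <-> p i < p j.
Proof.
case=> Hs [_ H] i j; rewrite size_map in Hs.
by apply: H; rewrite (nth_map 0) // Hs.
Qed.

Lemma card_ord_lt n (m : nat) : m <= n -> #|[set i : 'I_n | i < m]| = m.
Proof.
move=> hm.
have -> : [set i : 'I_n | i < m] = [set widen_ord hm x | x : 'I_m].
  apply/setP => i; rewrite !inE; apply/idP/imsetP => [h|[x _ ->] //=].
  by exists (Ordinal h) => //; apply/val_inj.
rewrite card_imset ?card_ord //; move=> x y /(congr1 val) /= h; exact: val_inj.
Qed.

Lemma perm_rank n (p : 'S_n) i : val (p i) = #|[set j | p j < p i]|.
Proof.
have -> : [set j | p j < p i] = (p^-1)%g @: [set m : 'I_n | m < p i].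
  apply/setP => j; rewrite inE; apply/idP/imsetP.
    by move=> h; exists (p j); rewrite ?inE // permK.
  by case=> x; rewrite inE => h ->; rewrite permKV.
rewrite card_imset; last exact: perm_inj.
by rewrite card_ord_lt // ltnW.
Qed.
Lemma perm_eq_order n (p q : 'S_n) :
  (forall i j, p i < p j <-> q i < q j) -> p = q.
Proof.
move=> H; apply/permP => i; apply/val_inj; rewrite /= (@perm_rank _ p i) (@perm_rank _ q i).
by apply: eq_card => j; rewrite !inE; apply/idP/idP => /(H j i).
Qed.

Lemma rank_perm n (s : seq nat) : size s = n -> uniq s ->
  exists p : 'S_n, forall i j : 'I_n, nth 0 s i < nth 0 s j <-> p i < p j.
Proof.
move=> Hs Hu.
pose r (i : 'I_n) := #|[set j : 'I_n | nth 0 s j < nth 0 s i]|.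
have rlt : forall i, r i < n.
  move=> i; rewrite /r -[X in _ < X](card_ord n); apply: proper_card.
  apply/properP; split; first exact/subsetP.
  by exists i; rewrite ?inE ?ltnn.
have mono : forall i j : 'I_n, nth 0 s i < nth 0 s j -> r i < r j.
  move=> i j h; apply: proper_card; apply/properP; split.
    by apply/subsetP => x; rewrite !inE => /ltn_trans; apply.
  by exists i; rewrite ?inE ?ltnn.
have mono' : forall i j : 'I_n, nth 0 s i <= nth 0 s j -> r i <= r j.
  move=> i j h; apply: subset_leq_card; apply/subsetP => x; rewrite !inE.
  by move=> /leq_trans; apply.
pose f i := Ordinal (rlt i).
have finj : injective f.
  move=> i j /(congr1 val) /= E.
  case: (ltngtP (nth 0 s i) (nth 0 s j)) => h.
  - by have := mono _ _ h; rewrite E ltnn.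
  - by have := mono _ _ h; rewrite E ltnn.
  - apply/val_inj/eqP; rewrite -(nth_uniq 0 _ _ Hu) ?Hs ?ltn_ord //; exact/eqP.
exists (perm finj) => i j; rewrite !permE /=; split; first exact: mono.
by move=> h; rewrite ltnNge; apply/negP => /mono'; rewrite leqNgt h.
Qed.

Lemma ints_cons_none (s : seq letter) : ints (None :: s) = ints s.
Proof. by []. Qed.

Lemma nth_take_drop (u : seq nat) m d i : i < m ->
  nth 0 (take m (drop d u)) i = nth 0 u (d + i).
Proof. by move=> h; rewrite nth_take // nth_drop. Qed.

Theorem proposition1 (n : nat) (hn : 3 <= n) (u : seq nat) :
  ~ upword n (Diamond :: map Some u).
Proof.
case: n hn => [|[|[|k]]] // _.
case=> Hpos [Hsz [_ [Huniq Hcov]]].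
rewrite /= size_map in Hsz Huniq Hcov.
have up0 : upfactor k.+3 (None :: map Some u) 0 = None :: map Some (take k.+2 u).
  by rewrite /upfactor drop0 /= map_take.
have upS : forall i, upfactor k.+3 (None :: map Some u) i.+1 = map Some (take k.+3 (drop i u)).
  by move=> i; rewrite /upfactor /= map_take map_drop.
set a := take k.+2 u.
have Hsa : size a = k.+2 by rewrite size_takel.
have Hua : uniq a.
  by have := Huniq 0 (leq0n _); rewrite up0 ints_cons_none ints_map.
have apos : forall y, y \in a -> 0 < y.
  move: Hpos; rewrite /pos_letters ints_cons_none ints_map => /allP H y hy.
  by apply: H; move: hy; apply: mem_take.
have pref : forall p : 'S_(k.+3),
    (forall i j : 'I_(k.+3), i < k.+2 -> j < k.+2 -> (nth 0 a i < nth 0 a j <-> p i < p j)) ->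
    ~ covers k.+3 (None :: map Some a) p -> covers k.+3 (map Some (take k.+3 u)) p.
  move=> p Hp Hn0.
  case: (Hcov p) => i [[Hi Hci] _].
  case: i Hi Hci => [|[|k']] Hi Hci.
  - by rewrite up0 in Hci.
  - by rewrite upS drop0 in Hci.
  exfalso; rewrite upS in Hci.
  set t := take k.+3 (drop k' u).
  have Hst : size t = k.+3 by rewrite size_takel // size_drop; lia.
  have Hut : uniq t.
    have := Huniq k'.+1; rewrite upS ints_map; apply; lia.
  case: (@rank_perm _ _ Hst Hut) => r Hr.
  have C1 : covers k.+3 (upfactor k.+3 (None :: map Some u) k'.+1) r.
    by rewrite upS; apply: cover_full.
  have C0 : covers k.+3 (upfactor k.+3 (None :: map Some u) 0) r.
    rewrite up0; split; first by rewrite /= size_map Hsa.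
    split; first by rewrite ints_cons_none ints_map.
    move=> [[|i] Hi'] [[|j] Hj'] x y //=.
    rewrite !(nth_map 0) ?Hsa; try lia.
    move=> -[<-] [<-].
    apply: (iff_trans _ (Hr (Ordinal Hi') (Ordinal Hj'))) => /=.
    have Hc := @covers_full _ _ _ Hci.
    have hi : i < k.+3 by lia.
    have hj : j < k.+3 by lia.
    have hi2 : i < k.+2 by lia.
    have hj2 : j < k.+2 by lia.
    have := Hc (Ordinal hi) (Ordinal hj); have := Hp (Ordinal hi) (Ordinal hj) hi2 hj2.
    rewrite /t /= !nth_take_drop // !addSnnS => H1 H2.
    by apply: iff_trans H1 _; apply: iff_sym; apply: H2.
  case: (Hcov r) => i0 [_ U].
  have E0 := U 0 (conj (leq0n _) C0).
  have E1 := U k'.+1 (conj (ltnW Hi) C1).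
  by rewrite E0 in E1.
set x := nth 0 a k; set z := nth 0 a k.+1.
set b := map (muln 2) a.
have key : forall v, v \notin b -> (x < z) = ~~ (2 * z < v) ->
    exists p : 'S_(k.+3), covers k.+3 (map Some (take k.+3 u)) p /\
      (p (inord k) < p (inord k.+2) <-> 2 * x < v).
  move=> v Hv Hc.
  have Hs : size (rcons b v) = k.+3 by rewrite size_rcons size_map Hsa.
  have Hu : uniq (rcons b v).
    rewrite rcons_uniq Hv map_inj_uniq // => y1 y2 /eqP.
    by rewrite eqn_pmul2l // => /eqP.
  case: (@rank_perm _ _ Hs Hu) => p Hp.
  have Nb : forall i, i < k.+2 -> nth 0 (rcons b v) i = 2 * nth 0 a i.
    by move=> i h; rewrite nth_rcons size_map Hsa h (nth_map 0) ?Hsa.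
  have Nv : nth 0 (rcons b v) k.+2 = v by rewrite nth_rcons size_map Hsa ltnn eqxx.
  exists p; split.
    apply: pref.
      move=> i j hi hj; apply: iff_trans (Hp i j).
      by rewrite !Nb // ltn_pmul2l.
    case=> _ [_ H].
    have := H (inord k.+1) (inord k.+2) x z.
    rewrite !inordK //= !(nth_map 0) ?Hsa // => /(_ erefl erefl) H1.
    have := Hp (inord k.+1) (inord k.+2); rewrite !inordK // Nb // Nv => H2.
    move: Hc; case: (ltnP (2 * z) v) => h /=.
      by move=> /negP; apply; apply/H1/H2.
    by move=> c; have := H2.2 (H1.1 c); rewrite ltnNge h.
  have := Hp (inord k) (inord k.+2); rewrite !inordK; try lia; rewrite Nb ?Nv; try lia; move=> H2.
have zpos : 0 < z by apply: apos; rewrite mem_nth // Hsa.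
have xz : x != z.
  by rewrite /x /z nth_uniq ?Hsa // eqn_leq ltnn andbF.
have perm_eq2 : forall p1 p2 : 'S_(k.+3),
    covers k.+3 (map Some (take k.+3 u)) p1 -> covers k.+3 (map Some (take k.+3 u)) p2 -> p1 = p2.
  move=> p1 p2 C1 C2; apply: perm_eq_order => i j.
  exact: iff_trans (iff_sym (@covers_full _ _ _ C1 i j)) (@covers_full _ _ _ C2 i j).
case: (ltnP x z) => c.
- have [p1 [C1 H1]] : exists p : 'S_(k.+3), covers k.+3 (map Some (take k.+3 u)) p /\
      (p (inord k) < p (inord k.+2) <-> 2 * x < 0).
    apply: key; last by rewrite c ltn0.
    by apply/mapP => -[y /apos hy]; lia.
  have [p2 [C2 H2]] : exists p : 'S_(k.+3), covers k.+3 (map Some (take k.+3 u)) p /\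
      (p (inord k) < p (inord k.+2) <-> 2 * x < 2 * z - 1).
    apply: key; last by rewrite c; symmetry; apply/negP; lia.
    by apply/mapP => -[y /apos hy]; lia.
  have E := perm_eq2 _ _ C1 C2; subst p2.
  have h : 2 * x < 2 * z - 1 by lia.
  by have := H1.1 (H2.2 h); rewrite ltn0.
- have zx : z < x by rewrite ltn_neqAle eq_sym xz c.
  have [p1 [C1 H1]] : exists p : 'S_(k.+3), covers k.+3 (map Some (take k.+3 u)) p /\
      (p (inord k) < p (inord k.+2) <-> 2 * x < (2 * (x + z)).+1).
    apply: key; last by rewrite ltnNge c; symmetry; apply: negbF; lia.
    by apply/mapP => -[y _]; lia.
  have [p2 [C2 H2]] : exists p : 'S_(k.+3), covers k.+3 (map Some (take k.+3 u)) p /\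
      (p (inord k) < p (inord k.+2) <-> 2 * x < (2 * z).+1).
    apply: key; last by rewrite ltnNge c; symmetry; apply: negbF; lia.
    by apply/mapP => -[y _]; lia.
  have E := perm_eq2 _ _ C1 C2; subst p2.
  have h : 2 * x < (2 * (x + z)).+1 by lia.
  by have := H2.1 (H1.2 h); lia.
Qed.
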